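(* Let $p$ be a prime and $(K,|\cdot|)$ an ultrametric field of characteristic $p$. Let $\lambda\in K$ with $|\lambda|=1$ such that the order $q$ of $\widetilde\lambda$ in $\widetilde K^*$ is finite, and suppose $\lambda^q\ne1$. Let $S(z)\in\mathcal{O}_K[z]$ satisfy $S(0)=1$ and $\mathrm{wideg}(S(z)-1)<\infty$, and put $Q(z)=\lambda zS(z)^p$. Then the minimal period of every periodic point of $Q$ in $\mathfrak{m}_K\setminus\{0\}$ equals $q$. Furthermore, the set $F$ of all such points is non-empty and finite, and for each $a\in F$ the multiplicity $m_a$ of $a$ as a fixed point of $Q^q$ is finite and divisible by $p$, and for every integer $n\ge1$ the multiplicity of $a$ as a fixed point of $Q^{qp^n}$ equals $p^nm_a$.
   Context: $\mathcal{O}_K=\{|z|\le1\}$, $\mathfrak{m}_K=\{|z|<1\}$, $\widetilde K=\mathcal{O}_K/\mathfrak{m}_K$. For $h\in\mathcal{O}_K[[z]]$, $\mathrm{wideg}(h)$ is the order (lowest degree of a nonzero term) of its coefficientwise reduction in $\widetilde K[[\zeta]]$. Periodic points and fixed points are considered in $\mathfrak{m}_K$ (points in an algebraic closure of $K$ with norm $<1$ may be taken, extending $|\cdot|$); the multiplicity of $a$ as a fixed point of $Q^m$ is its multiplicity as a zero of $Q^m(z)-z$. *)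

(* Defs.v *)
From HB Require Import structures.
From mathcomp Require Import all_boot all_order all_algebra.
From mathcomp Require Import reals.
Set Implicit Arguments. Unset Strict Implicit. Unset Printing Implicit Defensive.
Import Order.TTheory GRing.Theory Num.Theory.
Local Open Scope ring_scope.

Definition ultra_abs (R : realType) (K : fieldType) (v : K -> R) : Prop :=
  [/\ (forall x, 0 <= v x),
      (forall x, (v x == 0) = (x == 0)),
      (forall x y, v (x * y) = v x * v y) &
      (forall x y, v (x + y) <= Num.max (v x) (v y))].

(* q is the (finite) order of the residue class of lam in the
   multiplicative group of the residue field O_K / m_K:
   lam^q = 1 mod m_K, and lam^k <> 1 mod m_K for 0 < k < q. *)
Definition residue_order (R : realType) (K : fieldType) (v : K -> R)
    (lam : K) (q : nat) : Prop :=
  [/\ (0 < q)%N, v (lam ^+ q - 1) < 1 &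
      forall k, (0 < k < q)%N -> ~ (v (lam ^+ k - 1) < 1)].

Definition Qpoly (K : fieldType) (lam : K) (S : {poly K}) (p : nat) : {poly K} :=
  lam%:P * 'X * S ^+ p.

Definition piter (L : fieldType) (P : {poly L}) (n : nat) : {poly L} :=
  iter n (fun r => P \Po r) 'X.

Definition periodic_pt (R : realType) (L : fieldType) (v : L -> R)
    (P : {poly L}) (a : L) : Prop :=
  [/\ v a < 1, a != 0 & exists n, (0 < n)%N /\ (piter P n).[a] = a].

Definition minimal_period (L : fieldType) (P : {poly L}) (a : L) (n : nat) : Prop :=
  [/\ (0 < n)%N, (piter P n).[a] = a &
      forall k, (0 < k < n)%N -> (piter P k).[a] != a].

Definition fix_mult (L : fieldType) (P : {poly L}) (n : nat) (a : L) : nat :=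
  mup a (piter P n - 'X).

(* Main.v *)
Require Import Defs.
From HB Require Import structures.
From mathcomp Require Import all_boot all_order all_algebra.
From mathcomp Require Import reals zify ring lra.
Set Implicit Arguments. Unset Strict Implicit. Unset Printing Implicit Defensive.
Import Order.TTheory GRing.Theory Num.Theory.
Local Open Scope ring_scope.

Section Val.
Variables (R : realType) (L : fieldType) (v : L -> R) (hv : ultra_abs v).

Lemma v_ge0 x : 0 <= v x. Proof. by case: hv. Qed.
Lemma v_eq0 x : (v x == 0) = (x == 0). Proof. by case: hv. Qed.
Lemma vM x y : v (x * y) = v x * v y. Proof. by case: hv. Qed.
Lemma vD x y : v (x + y) <= Num.max (v x) (v y). Proof. by case: hv. Qed.
Lemma v0 : v 0 = 0. Proof. by apply/eqP; rewrite v_eq0. Qed.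
Lemma v_gt0 x : x != 0 -> 0 < v x.
Proof. by move=> hx; rewrite lt_def v_eq0 hx v_ge0. Qed.
Lemma v1 : v 1 = 1.
Proof.
have h1 : v 1 != 0 by rewrite v_eq0 oner_eq0.
have := vM 1 1; rewrite mulr1 => /esym/eqP; rewrite -subr_eq0.
have -> : v 1 * v 1 - v 1 = v 1 * (v 1 - 1) by rewrite mulrBr mulr1.
by rewrite mulf_eq0 (negPf h1) /= subr_eq0 => /eqP.
Qed.
Lemma vN1 : v (-1) = 1.
Proof.
have := vM (-1) (-1); rewrite mulrNN mulr1 v1 -expr2 => /esym/eqP.
by rewrite ieexprn_weq1 ?v_ge0 //= => /eqP.
Qed.
Lemma vN x : v (- x) = v x.
Proof. by rewrite -mulN1r vM vN1 mul1r. Qed.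
Lemma vX x n : v (x ^+ n) = v x ^+ n.
Proof. by elim: n => [|n IH]; rewrite ?expr0 ?v1 // !exprS vM IH. Qed.
Lemma vsubC x y : v (x - y) = v (y - x).
Proof. by rewrite -vN opprB. Qed.
Lemma vD_le e x y : v x <= e -> v y <= e -> v (x + y) <= e.
Proof. by move=> hx hy; apply: le_trans (vD x y) _; rewrite ge_max hx hy. Qed.
Lemma vD_lt e x y : v x < e -> v y < e -> v (x + y) < e.
Proof. by move=> hx hy; apply: le_lt_trans (vD x y) _; rewrite gt_max hx hy. Qed.
Lemma vB_le e x y : v x <= e -> v y <= e -> v (x - y) <= e.
Proof. by move=> hx hy; apply: vD_le; rewrite ?vN. Qed.
Lemma vB_lt e x y : v x < e -> v y < e -> v (x - y) < e.
Proof. by move=> hx hy; apply: vD_lt; rewrite ?vN. Qed.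
Lemma v_strict x y : v x < v y -> v (x + y) = v y.
Proof.
move=> hxy; apply/eqP; rewrite eq_le; apply/andP; split.
  by apply: vD_le => //; apply: ltW.
rewrite leNgt; apply/negP => hlt.
have : v ((x + y) - x) < v y by apply: vB_lt.
by rewrite addrC addKr ltxx.
Qed.
Lemma v_strictr x y : v y < v x -> v (x + y) = v x.
Proof. by rewrite addrC; apply: v_strict. Qed.
Lemma v_nat n : v n%:R <= 1.
Proof.
elim: n => [|n IH]; first by rewrite v0 ler01.
by rewrite -addn1 natrD; apply: vD_le => //; rewrite v1.
Qed.
Lemma v_sum_le e n (F : 'I_n -> L) : 0 <= e -> (forall i, v (F i) <= e) ->
  v (\sum_(i < n) F i) <= e.
Proof.
move=> e0 hF; elim/big_rec: _ => [|i x _ hx]; first by rewrite v0.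
exact: vD_le.
Qed.
Lemma v_sum_lt e n (F : 'I_n -> L) : 0 < e -> (forall i, v (F i) < e) ->
  v (\sum_(i < n) F i) < e.
Proof.
move=> e0 hF; elim/big_rec: _ => [|i x _ hx]; first by rewrite v0.
exact: vD_lt.
Qed.
Lemma v_prod_le1 n (F : 'I_n -> L) : (forall i, v (F i) <= 1) ->
  v (\prod_(i < n) F i) <= 1.
Proof.
move=> hF; elim/big_rec: _ => [|i x _ hx]; first by rewrite v1.
by rewrite vM; apply: mulr_ile1 => //; apply: v_ge0.
Qed.
Lemma v_prod_diff e n (F G : 'I_n -> L) : 0 <= e ->
  (forall i, v (F i) <= 1) -> (forall i, v (G i) <= 1) ->
  (forall i, v (F i - G i) <= e) ->
  v (\prod_(i < n) F i - \prod_(i < n) G i) <= e.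
Proof.
move=> e0 hF hG hFG; elim: n F G hF hG hFG => [|n IH] F G hF hG hFG.
  by rewrite !big_ord0 subrr v0.
rewrite !big_ord_recr /=.
set A := \prod_(i < n) _; set B := \prod_(i < n) _.
have -> : A * F ord_max - B * G ord_max = (A - B) * F ord_max + B * (F ord_max - G ord_max).
  by rewrite mulrBl mulrBr addrA subrK.
apply: vD_le; rewrite vM.
  apply: le_trans (_ : v (A - B) * 1 <= _); last first.
    by rewrite mulr1; apply: IH => i.
  by apply: ler_wpM2l; [apply: v_ge0| apply: hF].
apply: le_trans (_ : 1 * e <= _); last by rewrite mul1r.
apply: ler_pM => //; try apply: v_ge0; first by apply: v_prod_le1 => i.
Qed.


Definition integral (g : {poly L}) := forall i, v g`_i <= 1.
Definition small (g : {poly L}) := forall i, v g`_i < 1.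

Lemma integral_MXC g c : integral (g * 'X + c%:P) -> integral g /\ v c <= 1.
Proof.
move=> h; split; last by have := h 0%N; rewrite coefD coefMX coefC /= add0r.
by move=> i; have := h i.+1; rewrite coefD coefMX coefC /= addr0.
Qed.

Lemma integral_horner g x : integral g -> v x <= 1 -> v g.[x] <= 1.
Proof.
elim/poly_ind: g => [|g c IH] hg hx; first by rewrite horner0 v0 // ler01.
have [hg' hc] := integral_MXC hg.
rewrite hornerMXaddC; apply: vD_le => //; rewrite vM.
by apply: mulr_ile1; rewrite ?v_ge0 ?IH.
Qed.

Lemma integral_lip g x y : integral g -> v x <= 1 -> v y <= 1 ->
  v (g.[x] - g.[y]) <= v (x - y).
Proof.
elim/poly_ind: g => [|g c IH] hg hx hy; first by rewrite !horner0 subrr v0 // v_ge0.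
have [hg' hc] := integral_MXC hg.
rewrite !hornerMXaddC.
have -> : g.[x] * x + c - (g.[y] * y + c) = (g.[x] - g.[y]) * x + g.[y] * (x - y).
  by rewrite opprD addrACA subrr addr0 mulrBl mulrBr addrA subrK.
apply: vD_le; rewrite vM.
  apply: le_trans (_ : v (x - y) * 1 <= _); last by rewrite mulr1.
  by apply: ler_pM; rewrite ?v_ge0 ?IH.
apply: le_trans (_ : 1 * v (x - y) <= _); last by rewrite mul1r.
by apply: ler_pM; rewrite ?v_ge0 ?integral_horner.
Qed.

Lemma poly_lip g : exists C, [/\ 0 <= C,
  (forall x, v x <= 1 -> v g.[x] <= C) &
  (forall x y, v x <= 1 -> v y <= 1 -> v (g.[x] - g.[y]) <= C * v (x - y))].
Proof.
elim/poly_ind: g => [|g c [C [C0 hC1 hC2]]].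
  by exists 0; split => // *; rewrite ?horner0 ?subrr v0 // ?mul0r.
exists (Num.max C (v c)); split; first by rewrite le_max C0.
  move=> x hx; rewrite hornerMXaddC; apply: vD_le; last by rewrite le_max lexx orbT.
  rewrite vM; apply: le_trans (_ : C * 1 <= _); last by rewrite mulr1 le_max lexx.
  by apply: ler_pM; rewrite ?v_ge0 ?hC1.
move=> x y hx hy; rewrite !hornerMXaddC.
have -> : g.[x] * x + c - (g.[y] * y + c) = (g.[x] - g.[y]) * x + g.[y] * (x - y).
  by rewrite opprD addrACA subrr addr0 mulrBl mulrBr addrA subrK.
have hM : C * v (x - y) <= Num.max C (v c) * v (x - y).
  by apply: ler_wpM2r; rewrite ?v_ge0 // le_max lexx.
apply: vD_le; rewrite vM; apply: le_trans hM.
  apply: le_trans (_ : C * v (x - y) * 1 <= _); last by rewrite mulr1.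
  by apply: ler_pM; rewrite ?v_ge0 ?hC2 // mulr_ge0 ?v_ge0.
by apply: ler_pM; rewrite ?v_ge0 ?hC1.
Qed.

Lemma integral0 : integral 0.
Proof. by move=> i; rewrite coef0 v0 // ler01. Qed.
Lemma integralC c : v c <= 1 -> integral c%:P.
Proof. by move=> hc i; rewrite coefC; case: ifP => _ //; rewrite v0 // ler01. Qed.
Lemma integral1 : integral 1.
Proof. by apply: integralC; rewrite v1. Qed.
Lemma integralX : integral 'X.
Proof. by move=> i; rewrite coefX; case: (_ == _); rewrite /= ?v1 ?v0 // ler01. Qed.
Lemma integralD f g : integral f -> integral g -> integral (f + g).
Proof. by move=> hf hg i; rewrite coefD; apply: vD_le. Qed.
Lemma integralN f : integral f -> integral (- f).
Proof. by move=> hf i; rewrite coefN vN. Qed.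
Lemma integralB f g : integral f -> integral g -> integral (f - g).
Proof. by move=> hf hg; apply: integralD => //; apply: integralN. Qed.
Lemma integralM f g : integral f -> integral g -> integral (f * g).
Proof.
move=> hf hg i; rewrite coefM; apply: v_sum_le => // j; rewrite vM.
by apply: mulr_ile1; rewrite ?v_ge0.
Qed.
Lemma integralZ c f : v c <= 1 -> integral f -> integral (c *: f).
Proof.
move=> hc hf i; rewrite coefZ vM.
by apply: mulr_ile1; rewrite ?v_ge0.
Qed.
Lemma integralXn f n : integral f -> integral (f ^+ n).
Proof.
move=> hf; elim: n => [|n IH]; first by rewrite expr0; apply: integral1.
by rewrite exprS; apply: integralM.
Qed.
Lemma integral_prod n (F : 'I_n -> {poly L}) : (forall i, integral (F i)) ->
  integral (\prod_(i < n) F i).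
Proof.
move=> hF; elim/big_rec: _ => [|i x _ hx]; first exact: integral1.
exact: integralM.
Qed.
Lemma integral_sum n (F : 'I_n -> {poly L}) : (forall i, integral (F i)) ->
  integral (\sum_(i < n) F i).
Proof.
move=> hF; elim/big_rec: _ => [|i x _ hx]; first exact: integral0.
exact: integralD.
Qed.
Lemma integral_comp f g : integral f -> integral g -> integral (f \Po g).
Proof.
move=> hf hg; rewrite comp_polyE; apply: integral_sum => i.
by apply: integralZ => //; apply: integralXn.
Qed.

Lemma small_mul f g : small f -> integral g -> small (f * g).
Proof.
move=> hf hg i; rewrite coefM; apply: v_sum_lt => // j; rewrite vM.
apply: le_lt_trans (_ : v f`_j * 1 < _); last by rewrite mulr1.
by apply: ler_wpM2l; rewrite ?v_ge0.
Qed.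

Definition redeg (d : nat) (g : {poly L}) :=
  [/\ integral g, v g`_d = 1 & forall i, (d < i)%N -> v g`_i < 1].

Lemma redegC c : v c = 1 -> redeg 0 c%:P.
Proof.
move=> hc; split; first by apply: integralC; rewrite hc.
  by rewrite coefC.
by move=> [|i] // _; rewrite coefC v0 // ltr01.
Qed.

Lemma redegX : redeg 1 'X.
Proof.
split; first exact: integralX.
  by rewrite coefX v1.
by move=> [|[|i]] // _; rewrite coefX v0 // ltr01.
Qed.

Lemma redegM d e f g : redeg d f -> redeg e g -> redeg (d + e) (f * g).
Proof.
move=> [hf1 hf2 hf3] [hg1 hg2 hg3]; split; first exact: integralM.
  have hd : (d < (d + e).+1)%N by rewrite ltnS leq_addr.
  rewrite coefM (bigD1 (Ordinal hd)) //= big_mkcond /=.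
  rewrite addrC v_strict // vM hf2 addKn hg2 mulr1 //.
  apply: v_sum_lt => // j; case: ifP => hj; last by rewrite v0 ltr01.
  rewrite vM; case: (ltngtP j d) => hjd.
  - apply: le_lt_trans (_ : 1 * v g`_(d + e - j) < _); last first.
      by rewrite mul1r hg3 //; lia.
    by apply: ler_wpM2r; rewrite ?v_ge0.
  - apply: le_lt_trans (_ : v f`_j * 1 < _); last by rewrite mulr1 hf3.
    by apply: ler_wpM2l; rewrite ?v_ge0.
  - by move: hj; rewrite -(inj_eq val_inj) /= hjd eqxx.
move=> i hi; rewrite coefM; apply: v_sum_lt => // j; rewrite vM.
case: (leqP j d) => hjd.
  apply: le_lt_trans (_ : 1 * v g`_(i - j) < _); last first.
    by rewrite mul1r hg3 //; lia.
  by apply: ler_wpM2r; rewrite ?v_ge0.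
apply: le_lt_trans (_ : v f`_j * 1 < _); last by rewrite mulr1 hf3.
by apply: ler_wpM2l; rewrite ?v_ge0.
Qed.

Lemma redeg1 : redeg 0 1.
Proof. by rewrite -polyC1; apply: redegC; rewrite v1. Qed.

Lemma redegXn d f n : redeg d f -> redeg (n * d) (f ^+ n).
Proof.
move=> hf; elim: n => [|n IH]; first by rewrite expr0 mul0n; apply: redeg1.
by rewrite exprS mulSn; apply: redegM.
Qed.

Lemma redeg_comp d e f g : (0 < e)%N -> redeg d f -> redeg e g ->
  redeg (d * e) (f \Po g).
Proof.
move=> e0 [hf1 hf2 hf3] hg; have [hg1 hg2 hg3] := hg.
have hd : (d < size f)%N.
  rewrite ltnNge; apply/negP => hs; move: hf2; rewrite nth_default // v0 // => /eqP.
  by rewrite eq_sym oner_eq0.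
have hgi i : redeg (i * e) (g ^+ i) by apply: redegXn.
split; first exact: integral_comp.
  rewrite comp_polyE coef_sum (bigD1 (Ordinal hd)) //= big_mkcond /= coefZ.
  have [_ hgd _] := hgi d; rewrite addrC v_strict vM hf2 hgd mulr1 //.
  apply: v_sum_lt => // j; case: ifP => hj; last by rewrite v0 ltr01.
  rewrite coefZ vM; case: (ltngtP j d) => hjd.
  - have [hi1 _ hi3] := hgi j.
    apply: le_lt_trans (_ : 1 * v (g ^+ j)`_(d * e) < _); last first.
      by rewrite mul1r hi3 // ltn_pmul2r.
    by apply: ler_wpM2r; rewrite ?v_ge0.
  - have [hi1 _ _] := hgi j.
    apply: le_lt_trans (_ : v f`_j * 1 < _); last by rewrite mulr1 hf3.
    by apply: ler_wpM2l; rewrite ?v_ge0.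
  - by move: hj; rewrite -(inj_eq val_inj) /= hjd eqxx.
move=> i hi; rewrite comp_polyE coef_sum; apply: v_sum_lt => // j.
rewrite coefZ vM; have [hi1 _ hi3] := hgi j; case: (leqP j d) => hjd.
  apply: le_lt_trans (_ : 1 * v (g ^+ j)`_i < _); last first.
    rewrite mul1r hi3 //; apply: leq_ltn_trans hi.
    by rewrite leq_pmul2r.
  by apply: ler_wpM2r; rewrite ?v_ge0.
apply: le_lt_trans (_ : v f`_j * 1 < _); last by rewrite mulr1 hf3.
by apply: ler_wpM2l; rewrite ?v_ge0.
Qed.


Lemma prod_cst n (c : L) : \prod_(i < n) c = c ^+ n.
Proof. by elim: n => [|n IH]; rewrite ?big_ord0 ?expr0 // big_ord_recr /= IH exprSr. Qed.

Lemma powle (t : R) n : 0 <= t -> t <= 1 -> (0 < n)%N -> t ^+ n <= t.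
Proof.
move=> t0 t1; case: n => // n _; rewrite exprS.
apply: le_trans (_ : t * 1 <= _); last by rewrite mulr1.
by apply: ler_wpM2l => //; apply: exprn_ile1.
Qed.

Lemma v_binom y n : v y <= 1 -> v ((1 + y) ^+ n - 1 - n%:R * y) <= v y ^+ 2.
Proof.
move=> hy; elim: n => [|n IH].
  by rewrite expr0 subrr mul0r subr0 v0 exprn_ge0 ?v_ge0.
have -> : (1 + y) ^+ n.+1 - 1 - n.+1%:R * y =
   (1 + y) * ((1 + y) ^+ n - 1 - n%:R * y) + n%:R * y ^+ 2.
  by rewrite exprS -[n.+1]addn1 natrD; ring.
apply: vD_le; rewrite vM.
  apply: le_trans (_ : 1 * v y ^+ 2 <= _); last by rewrite mul1r.
  apply: ler_pM => //; rewrite ?v_ge0 //.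
  by apply: vD_le; rewrite ?v1.
apply: le_trans (_ : 1 * v y ^+ 2 <= _); last by rewrite mul1r.
by apply: ler_pM; rewrite ?v_ge0 ?v_nat ?vX.
Qed.

Section Dyn.
Variables (p : nat) (hp : prime p) (hch : p \in [pchar L]).

Lemma p_gt1 : (1 < p)%N. Proof. exact: prime_gt1. Qed.
Lemma p_gt0 : (0 < p)%N. Proof. exact: prime_gt0. Qed.

Lemma frobD (x y : L) : (x + y) ^+ p = x ^+ p + y ^+ p.
Proof. by rewrite -!(pFrobenius_autE hch) rmorphD. Qed.
Lemma frobB (x y : L) : (x - y) ^+ p = x ^+ p - y ^+ p.
Proof. by rewrite -!(pFrobenius_autE hch) rmorphB. Qed.
Lemma frob_inj (x y : L) : x ^+ p = y ^+ p -> x = y.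
Proof.
move=> h; apply/eqP; rewrite -subr_eq0.
have : (x - y) ^+ p == 0 by rewrite frobB h subrr.
by rewrite expf_eq0 p_gt0.
Qed.
Lemma frob_nat n : (n%:R : L) ^+ p = n%:R.
Proof.
elim: n => [|n IH]; first by rewrite expr0n; case: p p_gt0.
by rewrite -addn1 natrD frobD IH expr1n.
Qed.
Lemma v_nat_unit n : ~~ (p %| n)%N -> v n%:R = 1.
Proof.
rewrite (dvdn_pcharf hch) => hn.
have h := frob_nat n; have := congr1 v h; rewrite vX.
have : v n%:R != 0 by rewrite v_eq0.
move: (v n%:R) (v_ge0 n%:R) => t t0 tn0 htp.
have : t ^+ p.-1 == 1.
  have e : t * (t ^+ p.-1 - 1) = 0 by rewrite mulrBr mulr1 -exprS prednK ?p_gt0 // htp subrr.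
  by move: e => /eqP; rewrite mulf_eq0 (negPf tn0) subr_eq0.
by rewrite ieexprn_weq1 // -(subn1 p) subn_eq0 leqNgt p_gt1 /= => /eqP.
Qed.

Definition good (g H : L -> L) :=
  (forall x, v x < 1 -> g x = x * (1 + H x) ^+ p /\ v (H x) < 1) /\
  (forall x y, v x < 1 -> v y < 1 -> v (H x - H y) <= v (x - y)).

Lemma good_ext g g' H : (forall x, g x = g' x) -> good g H -> good g' H.
Proof. by move=> e [h1 h2]; split=> // x hx; rewrite -e; apply: h1. Qed.

Lemma v1H (h : L) : v h < 1 -> v (1 + h) = 1.
Proof. by move=> hh; rewrite v_strictr v1. Qed.

Section Good.
Variables (g H : L -> L) (hg : good g H).

Lemma good_v x : v x < 1 -> v (g x) = v x.
Proof.
move=> hx; have [[-> hH] _] := (hg.1 x hx, hg).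
by rewrite vM vX v1H // expr1n mulr1.
Qed.

Lemma good_iter_v j x : v x < 1 -> v (iter j g x) = v x.
Proof. by move=> hx; elim: j => //= j IH; rewrite good_v // IH. Qed.

Lemma good_iter_lt j x : v x < 1 -> v (iter j g x) < 1.
Proof. by move=> hx; rewrite good_iter_v. Qed.

Lemma good_step x : v x < 1 -> v (g x - x) = v x * v (H x) ^+ p.
Proof.
move=> hx; have [-> hH] := hg.1 x hx.
have -> : x * (1 + H x) ^+ p - x = x * ((1 + H x) ^+ p - 1) by rewrite mulrBr mulr1.
by rewrite vM frobD expr1n addrC addKr vX.
Qed.

Lemma good_lip x y : v x < 1 -> v y < 1 -> v (g x - g y) <= v (x - y).
Proof.
move=> hx hy; have [ex hHx] := hg.1 x hx; have [ey hHy] := hg.1 y hy.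
rewrite ex ey.
have -> : x * (1 + H x) ^+ p - y * (1 + H y) ^+ p =
   (x - y) * (1 + H x) ^+ p + y * ((1 + H x) ^+ p - (1 + H y) ^+ p).
  by rewrite mulrBl mulrBr addrA subrK.
apply: vD_le; first by rewrite vM vX v1H // expr1n mulr1.
rewrite vM -frobB vX.
have -> : 1 + H x - (1 + H y) = H x - H y by rewrite opprD addrACA subrr add0r.
have hl := hg.2 x y hx hy.
apply: le_trans (_ : 1 * v (x - y) <= _); last by rewrite mul1r.
apply: ler_pM; rewrite ?v_ge0 ?exprn_ge0 ?v_ge0 //; first exact: ltW.
apply: (le_trans (powle _ _ _) hl); rewrite ?v_ge0 ?p_gt0 //.
by apply: ltW; apply: le_lt_trans hl _; apply: vB_lt.
Qed.

Lemma good_iter_lip j x y : v x < 1 -> v y < 1 ->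
  v (iter j g x - iter j g y) <= v (x - y).
Proof.
move=> hx hy; elim: j => //= j IH; apply: le_trans IH.
by apply: good_lip; rewrite good_iter_v.
Qed.

Lemma good_iter_formula n x : v x < 1 ->
  iter n g x = x * (\prod_(j < n) (1 + H (iter j g x))) ^+ p.
Proof.
move=> hx; elim: n => [|n IH]; first by rewrite big_ord0 expr1n mulr1.
rewrite big_ord_recr /= exprMn mulrA -IH.
by have [-> _] := hg.1 (iter n g x) (good_iter_lt n hx).
Qed.

Lemma good_est x : v x < 1 -> forall j,
  v (iter j g x - x) <= v x * v (H x) ^+ p.
Proof.
move=> hx; set t := v (H x).
have t0 : 0 <= t by apply: v_ge0.
have t1 : t < 1 by have [_ ->] := hg.1 x hx.
have hb : v x * t ^+ p <= t.
  apply: le_trans (_ : 1 * t <= _); last by rewrite mul1r.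
  apply: ler_pM; rewrite ?v_ge0 ?exprn_ge0 //; first exact: ltW.
  by apply: powle; rewrite ?p_gt0 // ltW.
elim=> [|j IH]; first by rewrite /= subrr v0 mulr_ge0 ?v_ge0 ?exprn_ge0.
have hxj : v (iter j g x) < 1 by rewrite good_iter_v.
have -> : iter j.+1 g x - x = (g (iter j g x) - iter j g x) + (iter j g x - x).
  by rewrite /= addrA subrK.
apply: vD_le => //; rewrite good_step // good_iter_v //.
apply: ler_wpM2l; first exact: v_ge0.
apply: lerXn2r; rewrite ?nnegrE ?v_ge0 //.
have -> : H (iter j g x) = (H (iter j g x) - H x) + H x by rewrite subrK.
apply: vD_le => //; apply: le_trans (hg.2 _ _ hxj hx) _.
exact: le_trans IH hb.
Qed.

Definition Hp x := \prod_(j < p) (1 + H (iter j g x)) - 1.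

Lemma v_Hp x : v x < 1 -> v (Hp x) = v (H x) ^+ p.
Proof.
move=> hx; set t := v (H x).
have t0 : 0 <= t by apply: v_ge0.
have t1 : t < 1 by have [_ ->] := hg.1 x hx.
have he : v (Hp x - H x ^+ p) <= v x * t ^+ p.
  have -> : Hp x - H x ^+ p = \prod_(j < p) (1 + H (iter j g x)) - \prod_(j < p) (1 + H x).
    by rewrite /Hp prod_cst frobD expr1n opprD addrA.
  apply: v_prod_diff.
  - by rewrite mulr_ge0 ?v_ge0 ?exprn_ge0.
  - move=> i; rewrite v1H //; have [_ ->] := hg.1 (iter i g x) (good_iter_lt i hx) => //.
  - by move=> i; rewrite v1H.
  - move=> i; rewrite opprD addrACA subrr add0r.
    apply: le_trans (good_est hx i).
    by apply: hg.2; rewrite ?good_iter_v.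
have -> : Hp x = (Hp x - H x ^+ p) + H x ^+ p by rewrite subrK.
have [tz|tp] := eqVneq t 0.
  move: he; rewrite tz expr0n /= (negPf (lt0n_neq0 p_gt0)) mulr0 => he.
  have -> : Hp x - H x ^+ p = 0 by apply/eqP; rewrite -v_eq0 eq_le he v_ge0.
  by rewrite add0r vX -/t tz expr0n (negPf (lt0n_neq0 p_gt0)).
rewrite v_strict vX //; apply: le_lt_trans he _.
rewrite -{2}[t ^+ p]mul1r ltr_pM2r //; last by rewrite exprn_gt0 // lt_def tp.
Qed.

Lemma good_p : good (iter p g) Hp.
Proof.
split.
  move=> x hx; split; last by rewrite v_Hp // exprn_ilt1 ?v_ge0 -?lt0n ?p_gt0 //; have [_ ->] := hg.1 x hx.
  by rewrite good_iter_formula // /Hp addrC subrK.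
move=> x y hx hy; rewrite /Hp opprD addrACA subrr addr0.
apply: v_prod_diff; rewrite ?v_ge0 //.
- by move=> i; rewrite v1H //; have [_ ->] := hg.1 (iter i g x) (good_iter_lt i hx).
- by move=> i; rewrite v1H //; have [_ ->] := hg.1 (iter i g y) (good_iter_lt i hy).
move=> i; rewrite opprD addrACA subrr add0r.
apply: le_trans (good_iter_lip i hx hy).
by apply: hg.2; rewrite ?good_iter_v.
Qed.

Lemma good_coprime N x : v x < 1 -> x != 0 -> ~~ (p %| N)%N ->
  iter N g x = x -> H x = 0.
Proof.
move=> hx x0 hN.
rewrite good_iter_formula // => e.
have hP1 : (\prod_(j < N) (1 + H (iter j g x))) ^+ p = 1 ^+ p.
  by apply: (mulfI x0); rewrite expr1n mulr1; exact: e.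
move/frob_inj: hP1 => hP.
apply/eqP; rewrite -v_eq0; apply/negPn/negP => tn0.
set t := v (H x) in tn0.
have t0 : 0 < t by rewrite lt_def tn0 v_ge0.
have t1 : t < 1 by have [_ ->] := hg.1 x hx.
have hN1 : v ((1 + H x) ^+ N - 1) = t.
  have -> : (1 + H x) ^+ N - 1 = ((1 + H x) ^+ N - 1 - N%:R * H x) + N%:R * H x.
    by rewrite subrK.
  rewrite v_strict vM v_nat_unit // mul1r //.
  apply: le_lt_trans (v_binom _ _) _; first exact: ltW.
  by rewrite expr2 -{3}[v (H x)]mul1r ltr_pM2r.
have he : v (\prod_(j < N) (1 + H (iter j g x)) - (1 + H x) ^+ N) <= v x * t ^+ p.
  rewrite -prod_cst; apply: v_prod_diff.
  - by rewrite mulr_ge0 ?v_ge0 ?exprn_ge0 ?ltW.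
  - by move=> i; rewrite v1H //; have [_ ->] := hg.1 (iter i g x) (good_iter_lt i hx).
  - by move=> i; rewrite v1H.
  - move=> i; rewrite opprD addrACA subrr add0r.
    apply: le_trans (good_est hx i).
    by apply: hg.2; rewrite ?good_iter_v.
have : v (\prod_(j < N) (1 + H (iter j g x)) - 1) = t.
  have -> : \prod_(j < N) (1 + H (iter j g x)) - 1 =
     (\prod_(j < N) (1 + H (iter j g x)) - (1 + H x) ^+ N) + ((1 + H x) ^+ N - 1).
    by rewrite addrA subrK.
  rewrite v_strict hN1 //; apply: le_lt_trans he _.
  apply: le_lt_trans (_ : v x * t < _).
    by apply: ler_wpM2l; rewrite ?v_ge0 // powle ?p_gt0 // ltW.
  by rewrite -{2}[t]mul1r ltr_pM2r.
by rewrite hP subrr v0 => /eqP; rewrite eq_sym (negPf tn0).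
Qed.

End Good.

Lemma good_periodic N : (0 < N)%N -> forall g H, good g H -> forall x,
  v x < 1 -> x != 0 -> iter N g x = x -> H x = 0.
Proof.
elim: N {-2}N (leqnn N) => [|M IH] N hNM N0 g H hg x hx x0 hit.
  by move: hNM N0; rewrite leqn0 => /eqP ->.
have [hpN|hpN] := boolP (p %| N)%N; last exact: (good_coprime hg hx x0 hpN hit).
move: hpN => /dvdnP [K eK].
have K0 : (0 < K)%N by move: N0; rewrite eK muln_gt0 => /andP[].
have hK : (K <= M)%N.
  have : (K < N)%N by rewrite eK -[X in (X < _)%N]muln1 ltn_pmul2l ?p_gt1.
  by move=> h; rewrite -ltnS; apply: leq_trans h hNM.
have := IH K hK K0 _ _ (good_p hg) x hx x0.
rewrite -iterM -eK => /(_ hit) => hz.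
have := v_Hp hg hx; rewrite hz v0 => /esym/eqP.
by rewrite expf_eq0 p_gt0 v_eq0 => /eqP.
Qed.

End Dyn.

Lemma bernoulli (s : R) n : 0 <= s -> 1 + n%:R * s <= (1 + s) ^+ n.
Proof.
move=> s0; elim: n => [|n IH]; first by rewrite mul0r addr0 expr0.
rewrite exprS; apply: le_trans (_ : (1 + s) * (1 + n%:R * s) <= _); last first.
  by apply: ler_wpM2l => //; apply: addr_ge0.
have -> : (1 + s) * (1 + n%:R * s) = 1 + n.+1%:R * s + n%:R * s * s.
  by rewrite -[n.+1]addn1 natrD; ring.
by rewrite lerDl mulr_ge0 ?mulr_ge0 ?ler0n.
Qed.

Lemma smallpow (r d : R) : 0 < r -> r < 1 -> 0 < d ->
  exists N, forall n, (N <= n)%N -> r ^+ n < d.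
Proof.
move=> r0 r1 d0.
set s := r^-1 - 1.
have s0 : 0 < s by rewrite subr_gt0 invf_gt1.
have B0 : 0 <= d^-1 / s by rewrite divr_ge0 // ltW // invr_gt0.
exists (Num.bound (d^-1 / s)) => n hn.
have hb := archi_boundP B0.
have hn' : d^-1 / s < n%:R.
  by apply: lt_le_trans hb _; rewrite ler_nat.
have h1 : d^-1 < n%:R * s by rewrite -ltr_pdivrMr.
have h2 : d^-1 < (r^-1) ^+ n.
  have hb2 := bernoulli n (ltW s0).
  have es : 1 + s = r^-1 by rewrite /s addrC subrK.
  rewrite es in hb2.
  apply: lt_le_trans hb2; apply: lt_le_trans h1 _; rewrite lerDr //.
have : d^-1 < (r ^+ n)^-1 by rewrite -exprVn.
by rewrite ltf_pV2 ?posrE ?exprn_gt0.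
Qed.

Lemma mup_decomp (f : {poly L}) a : f != 0 ->
  exists F : {poly L}, f = F * ('X - a%:P) ^+ mup a f /\ F.[a] != 0.
Proof.
move=> f0; have hd : ('X - a%:P) ^+ mup a f %| f by rewrite -mup_geq.
exists (f %/ ('X - a%:P) ^+ mup a f); split; first by rewrite divpK.
apply/negP => hr.
have : ('X - a%:P) ^+ (mup a f).+1 %| f.
  rewrite -[X in _ %| X](divpK hd) exprS dvdp_mul2r ?dvdp_XsubCl //.
  by rewrite expf_neq0 // polyXsubC_eq0.
by rewrite -mup_geq // ltnn.
Qed.

Lemma asym (f : {poly L}) a : f != 0 -> v a <= 1 ->
  exists A, exists d, [/\ 0 < A, 0 < d &
    forall e, v e < d -> v f.[a + e] = v e ^+ mup a f * A].
Proof.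
move=> f0 ha; have [F [eF Fa]] := mup_decomp a f0.
have [C [C0 _ hC]] := poly_lip F.
set A := v F.[a].
have A0 : 0 < A by rewrite v_gt0.
exists A, (Num.min 1 (A / (C + 1))); split => //.
  by rewrite lt_min ltr01 divr_gt0 // ltr_wpDl.
move=> e; rewrite lt_min => /andP[e1 eA].
rewrite {1}eF hornerM horner_exp hornerXsubC (addrC a e) addrK vM vX mulrC.
congr (_ * _); rewrite addrC.
have hae : v (a + e) <= 1 by apply: vD_le => //; apply: ltW.
have -> : F.[a + e] = (F.[a + e] - F.[a]) + F.[a] by rewrite subrK.
rewrite v_strict //; apply: le_lt_trans (hC _ _ hae ha) _.
rewrite (addrC a e) addrK.
have h : v e < A / (C + 1) := eA.
rewrite ltr_pdivlMr ?ltr_wpDl // in h.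
apply: le_lt_trans h; rewrite mulrDr mulr1 mulrC lerDl v_ge0 //.
Qed.

Lemma mup_compare (f g : {poly L}) a (pi : L) (c1 c2 : R) k N0 :
  f != 0 -> g != 0 -> v a <= 1 -> 0 < v pi -> v pi < 1 -> 0 < c1 -> 0 < c2 ->
  (forall n, (N0 <= n)%N -> c1 * v f.[a + pi ^+ n] = c2 * v g.[a + pi ^+ n] ^+ k) ->
  mup a f = (k * mup a g)%N.
Proof.
move=> f0 g0 ha pi0 pi1 c10 c20 hrel.
have [Af [df [Af0 df0 hf]]] := asym f0 ha.
have [Ag [dg [Ag0 dg0 hgg]]] := asym g0 ha.
have dd : 0 < Num.min df dg by rewrite lt_min df0 dg0.
have [N hN] := smallpow pi0 pi1 dd.
set n := maxn N N0.
have hn1 : (N <= n)%N by rewrite leq_maxl.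
have hn0 : (N0 <= n)%N by rewrite leq_maxr.
set r := v pi.
have r0 : 0 < r by [].
have E n' : (N <= n')%N -> (N0 <= n')%N ->
    c1 * ((r ^+ n') ^+ mup a f * Af) = c2 * ((r ^+ n') ^+ mup a g * Ag) ^+ k.
  move=> h1 h2; have := hrel n' h2.
  have := hN n' h1; rewrite lt_min => /andP[e1 e2].
  by rewrite hf ?hgg ?vX.
have E1 := E n hn1 hn0.
have E2 := E n.+1 (leqW hn1) (leqW hn0).
rewrite exprSr in E2.
set X := r ^+ n in E1 E2.
have X0 : 0 < X by rewrite exprn_gt0.
set mf := mup a f in E1 E2 *; set mg := mup a g in E1 E2 *.
set Y := c2 * (X ^+ mg * Ag) ^+ k.
have L1 : c1 * (X ^+ mf * Af) * r ^+ mf = c1 * ((X * r) ^+ mf * Af).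
  by rewrite exprMn; ring.
have L2 : Y * (r ^+ mg) ^+ k = c2 * ((X * r) ^+ mg * Ag) ^+ k.
  by rewrite /Y !exprMn; ring.
have hE : Y * r ^+ mf = Y * r ^+ (mg * k).
  by rewrite exprM L2 -E2 -L1 E1.
have nz : Y != 0.
  by rewrite /Y mulf_neq0 ?expf_neq0 ?mulf_neq0 ?expf_neq0 // gt_eqF.
have := mulfI nz hE.
have r1 : r != 1 by rewrite lt_eqF.
move/(ieexprIn r0 r1) => ->.
by rewrite mulnC.
Qed.

End Val.

Lemma comp_polyXn_l (L : fieldType) (f g : {poly L}) n : (f ^+ n) \Po g = (f \Po g) ^+ n.
Proof. by elim: n => [|n IH]; rewrite ?expr0 ?comp_polyC // !exprS comp_polyM IH. Qed.

Lemma piter_eval (L : fieldType) (P : {poly L}) n x :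
  (piter P n).[x] = iter n (fun y => P.[y]) x.
Proof. by elim: n => [|n IH]; rewrite /= ?hornerX // horner_comp -IH. Qed.

Lemma piterS (L : fieldType) (P : {poly L}) n : piter P n.+1 = P \Po piter P n.
Proof. by []. Qed.

Lemma piter_formula (L : fieldType) (c : L) (T : {poly L}) p n :
  piter (c%:P * 'X * T ^+ p) n =
  (c ^+ n)%:P * 'X * (\prod_(j < n) (T \Po piter (c%:P * 'X * T ^+ p) j)) ^+ p.
Proof.
elim: n => [|n IH]; first by rewrite big_ord0 expr1n mulr1 expr0 polyC1 mul1r.
rewrite piterS big_ord_recr /=.
set A := piter _ n in IH *.
rewrite !comp_polyM comp_polyC comp_polyX comp_polyXn_l.
rewrite {1}IH exprSr polyCM exprMn.
by ring.
Qed.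

Section Closed.
Variables (R : realType) (L : closedFieldType) (v : L -> R) (hv : ultra_abs v).
Local Notation vM := (vM hv).
Local Notation vN := (vN hv).
Local Notation v0 := (v0 hv).
Local Notation vB_le := (vB_le hv).
Local Notation v_ge0 := (v_ge0 hv).

Lemma XsubCM_bound (g : {poly L}) r : (forall i, v g`_i <= v g`_0) -> 1 <= v r ->
  forall i, v ((('X - r%:P) * g)`_i) <= v ((('X - r%:P) * g)`_0).
Proof.
move=> hg hr i.
have c0 : (('X - r%:P) * g)`_0 = - (r * g`_0).
  by rewrite mulrBl coefB coefXM coefCM /= sub0r.
rewrite c0 vN vM; rewrite mulrBl coefB coefXM coefCM.
case: i => [|i] /=; first by rewrite sub0r vN vM.
apply: vB_le => //.
  apply: le_trans (hg i) _; apply: le_trans (_ : 1 * v g`_0 <= _); first by rewrite mul1r.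
  by apply: ler_wpM2r => //; apply: v_ge0.
by rewrite vM; apply: ler_wpM2l; [apply: v_ge0|apply: hg].
Qed.

Lemma root_small (f : {poly L}) : integral v f -> v f`_0 < 1 ->
  (exists i, v f`_i = 1) -> exists a, v a < 1 /\ root f a.
Proof.
move=> hfi hf0 [i hi].
have [rs ers] := closed_field_poly_normal f.
have [|hn] := boolP (has (fun z => v z < 1) rs).
  move=> /hasP [z zin hz]; exists z; split => //.
  rewrite ers rootE hornerZ.
  have := root_prod_XsubC rs z; rewrite zin rootE => /eqP ->.
  by rewrite mulr0.
exfalso.
have key : forall (c : L) rs, ~~ has (fun z => v z < 1) rs -> forall i,
    v (c *: \prod_(z <- rs) ('X - z%:P))`_i <= v (c *: \prod_(z <- rs) ('X - z%:P))`_0.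
  move=> c; elim => [|z rs' IH] /=.
    by move=> _ [|j]; rewrite big_nil alg_polyC coefC //= v0 // v_ge0.
  rewrite negb_or => /andP[hz hrs].
  rewrite big_cons scalerAr; apply: XsubCM_bound; first exact: IH.
  by rewrite leNgt.
have hb := key (lead_coef f) rs hn; rewrite -ers in hb.
have := le_lt_trans (hb i) hf0; rewrite hi ltxx //.
Qed.

End Closed.

Theorem propositionA1
  (R : realType) (p : nat) (K : fieldType) (absK : K -> R)
  (hK : ultra_abs absK) (hp : prime p) (hchar : p \in [pchar K])
  (lam : K) (hlam : absK lam = 1) (q : nat) (hq : residue_order absK lam q)
  (hlamq : lam ^+ q != 1)
  (S : {poly K}) (hSint : forall i, absK S`_i <= 1) (hS0 : S`_0 = 1)
  (hwideg : exists i, absK (S - 1)`_i = 1)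
  (L : closedFieldType) (absL : L -> R) (hL : ultra_abs absL)
  (f : {rmorphism K -> L}) (hf : forall x, absL (f x) = absK x) :
  let QL := map_poly f (Qpoly lam S p) in
  (forall a, periodic_pt absL QL a -> minimal_period QL a q) /\
  (exists a, periodic_pt absL QL a) /\
  (exists s : seq L, forall a, periodic_pt absL QL a <-> a \in s) /\
  (forall a, periodic_pt absL QL a ->
     [/\ piter QL q - 'X != 0,
         (p %| fix_mult QL q a)%N &
         forall n, (1 <= n)%N ->
           piter QL (q * p ^ n) - 'X != 0 /\
           fix_mult QL (q * p ^ n) a = (p ^ n * fix_mult QL q a)%N]).
Proof.
move=> QL.
have hchL : p \in [pchar L] := rmorph_pchar f hchar.
have p0 : (0 < p)%N := prime_gt0 hp.
set Lm := f lam.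
set SL := map_poly f S.
have eQL : QL = Lm%:P * 'X * SL ^+ p.
  by rewrite /QL /Qpoly !rmorphM /= map_polyC map_polyX rmorphXn.
have hLm : absL Lm = 1 by rewrite hf.
have hSLi : integral absL SL by move=> i; rewrite coef_map hf.
have hSL0 : SL`_0 = 1 by rewrite coef_map hS0; exact: (rmorph1 f).
have [q0 hq1 hq2] := hq.
have [D hD D0] : exists2 D, redeg absL D SL & (0 < D)%N.
  have [i hi] := hwideg.
  have i0 : (0 < i)%N.
    by case: i hi => //; rewrite coefB coef1 hS0 subrr (v0 hK) => /eqP; rewrite eq_sym oner_eq0.
  have eSi : (S - 1)`_i = S`_i by rewrite coefB coef1; case: i i0 {hi} => // i _; rewrite subr0.
  rewrite eSi in hi.
  have hPi : exists i, absL SL`_i == 1.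
    by exists i; rewrite coef_map hf hi.
  have hbnd : forall j, absL SL`_j == 1 -> (j <= size SL)%N.
    move=> j hj; apply: ltnW; rewrite ltnNge; apply/negP => hs.
    by move: hj; rewrite nth_default // (v0 hL) eq_sym oner_eq0.
  case: (ex_maxnP hPi hbnd) => D /eqP hD hmax.
  exists D; last first.
    apply: leq_trans i0 (hmax i _).
    by rewrite coef_map hf hi.
  split => // j hj; rewrite lt_neqAle hSLi andbT; apply/negP => hj1.
  by have := hmax j hj1; rewrite leqNgt hj.
have hredQ : redeg absL (1 + p * D) QL.
  rewrite eQL.
  have h1 : redeg absL (0 + 1) (Lm%:P * 'X) by apply: (redegM hL); [apply: (redegC hL)|apply: (redegX hL)].
  exact: (redegM hL h1 (redegXn hL p hD)).
set W := fun n => \prod_(j < n) (SL \Po piter QL j).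
have hform : forall n, piter QL n = (Lm ^+ n)%:P * 'X * (W n) ^+ p.
  by move=> n; rewrite /W eQL; apply: piter_formula.
set Qf := fun y => QL.[y].
have hQi : integral absL QL by case: hredQ.
have hQ0 : QL.[0] = 0 by rewrite eQL !hornerM hornerX mulr0 mul0r.
have hQv : forall x, absL x <= 1 -> absL (Qf x) <= absL x.
  move=> x hx; have := integral_lip hL hQi hx (_ : absL 0 <= 1).
  by rewrite hQ0 !subr0; apply; rewrite (v0 hL) ler01.
have hQiv : forall n x, absL x <= 1 -> absL (iter n Qf x) <= absL x.
  move=> n x hx; elim: n => //= n IH.
  have h1 : absL (iter n Qf x) <= 1 := le_trans IH hx.
  exact: (le_trans (hQv _ h1) IH).
have hWe : forall n x, (W n).[x] = \prod_(j < n) SL.[iter j Qf x].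
  by move=> n x; rewrite /W horner_prod; apply: eq_bigr => j _; rewrite horner_comp piter_eval.
have hiterf : forall n x, iter n Qf x = Lm ^+ n * x * (W n).[x] ^+ p.
  by move=> n x; rewrite -piter_eval hform !hornerE.
have [nu hnu] : exists nu, nu ^+ p = Lm ^+ q.
  have : size ('X^p - (Lm ^+ q)%:P) != 1 by rewrite size_XnsubC // eqSS -lt0n.
  by move/closed_rootP => [nu]; rewrite rootE !hornerE subr_eq0 => /eqP; exists nu.
have hnuv : absL nu = 1.
  have : absL nu ^+ p == 1 by rewrite -(vX hL) hnu (vX hL) hLm expr1n.
  by rewrite ieexprn_weq1 ?(v_ge0 hL) // (negbTE (lt0n_neq0 p0)) /= => /eqP.
have hLq : absL (Lm ^+ q - 1) < 1 by rewrite /Lm -rmorphXn -(rmorph1 f) -rmorphB hf.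
have hnu1v : absL (nu - 1) < 1.
  have : absL (nu - 1) ^+ p < 1 by rewrite -(vX hL) (frobB hchL) hnu expr1n.
  by apply: contraTT; rewrite -!leNgt => h; apply: exprn_ege1.
have hnu1 : nu != 1.
  apply/negP => /eqP e; move: hnu; rewrite e expr1n => /esym.
  rewrite /Lm -rmorphXn -(rmorph1 f) => /fmorph_inj /eqP.
  by rewrite (negbTE hlamq).
set h := nu%:P * W q - 1.
have hG : piter QL q = 'X * (1 + h) ^+ p.
  by rewrite hform /h addrC subrK exprMn -polyC_exp hnu; ring.
have hint1 : integral absL 1 by rewrite -polyC1; apply: (integralC hL); rewrite (v1 hL).
have hpiti : forall n, integral absL (piter QL n).
  elim=> [|n IH]; first exact: (integralX hL).
  by rewrite piterS; apply: (integral_comp hL).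
have hWi : forall n, integral absL (W n).
  by move=> n; apply: (integral_prod hL) => j; apply: (integral_comp hL).
have hhi : integral absL h.
  rewrite /h; apply: (integralB hL); last exact: hint1.
  by apply: (integralM hL); [apply: (integralC hL); rewrite hnuv|].
have hQf0 : forall n, iter n Qf 0 = 0.
  by elim=> //= n ->; rewrite /Qf hQ0.
have hW0 : forall n, (W n).[0] = 1.
  move=> n; rewrite hWe; apply: big1 => j _.
  by rewrite hQf0 horner_coef0 hSL0.
have hh0 : h.[0] = nu - 1 by rewrite /h !hornerE hW0 mulr1.
have hh0n : h.[0] != 0 by rewrite hh0 subr_eq0.
have hhn0 : h != 0 by apply: contra hh0n => /eqP ->; rewrite horner0.
have hHv : forall x, absL x < 1 -> absL h.[x] < 1.
  move=> x hx.
  have -> : h.[x] = (h.[x] - h.[0]) + (nu - 1) by rewrite hh0 subrK.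
  apply: (vD_lt hL) => //; apply: (le_lt_trans _ hx).
  have := integral_lip hL hhi (ltW hx) (_ : absL 0 <= 1).
  by rewrite subr0; apply; rewrite (v0 hL) ler01.
set g := fun x => (piter QL q).[x].
set Hf := fun x => h.[x].
have hgood : good absL p g Hf.
  split.
    move=> x hx; split; last exact: hHv.
    by rewrite /g /Hf hG !hornerE.
  move=> x y hx hy; rewrite /Hf.
  by apply: (integral_lip hL hhi); apply: ltW.
have hred_it : forall n, redeg absL ((1 + p * D) ^ n) (piter QL n).
  elim=> [|n IH]; first exact: (redegX hL).
  rewrite piterS expnS; apply: (redeg_comp hL) => //.
  by rewrite expn_gt0 addn_gt0.
have hunit : exists i, absL h`_i = 1.
  have [/existsP [i /eqP hi]|hn] := boolP [exists i : 'I_(size h), absL h`_i == 1].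
    by exists i.
  exfalso.
  have hs : small absL h.
    move=> i; have [hi|hi] := ltnP i (size h).
      rewrite lt_neqAle hhi andbT; apply/negP => /eqP e.
      by move: hn; rewrite negb_exists => /forallP /(_ (Ordinal hi)); rewrite /= e eqxx.
    by rewrite nth_default // (v0 hL) ltr01.
  have [_ hN _] := hred_it q.
  set N := ((1 + p * D) ^ q)%N in hN.
  have N1 : (1 < N)%N.
    rewrite /N; apply: leq_trans (_ : (1 + p * D)%N <= _)%N.
      by rewrite ltnS muln_gt0 p0 D0.
    by rewrite -{1}(expn1 (1 + p * D)) leq_pexp2l // addn_gt0.
  move: hN; rewrite hG.
  have e := subrXX (1 + h) 1 p.
  rewrite expr1n (addrC 1 h) addrK in e.
  set Sm := \sum_(i < p) _ in e.
  have hSm : integral absL Sm.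
    rewrite /Sm; apply: (integral_sum hL) => i; apply: (integralM hL).
      by apply: (integralXn hL); apply: (integralD hL) => //; exact: hint1.
    by apply: (integralXn hL); exact: hint1.
  have -> : 'X * (1 + h) ^+ p = 'X + 'X * (h * Sm) by rewrite (addrC 1 h) -e mulrBr mulr1 addrCA subrr addr0.
  rewrite coefD coefX coefXM (gtn_eqF N1) add0r.
  case: N N1 => // N _ /= H2.
  have := small_mul hL hs hSm N.
  by rewrite H2 ltxx.
have hpow1 : forall (y : L) m, absL y <= 1 -> absL (y - 1) < 1 -> absL (y ^+ m - 1) < 1.
  move=> y m hy hy1; elim: m => [|m IH]; first by rewrite expr0 subrr (v0 hL) ltr01.
  have -> : y ^+ m.+1 - 1 = y * (y ^+ m - 1) + (y - 1) by rewrite exprS mulrBr mulr1 addrA subrK.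
  apply: (vD_lt hL) => //; rewrite (vM hL).
  apply: le_lt_trans IH; apply: le_trans (_ : 1 * absL (y ^+ m - 1) <= _); last by rewrite mul1r.
  by apply: ler_wpM2r => //; apply: (v_ge0 hL).
have hdiv : forall n a, absL a < 1 -> a != 0 -> iter n Qf a = a -> (q %| n)%N.
  move=> n a ha a0 hit.
  have e1 : Lm ^+ n * (W n).[a] ^+ p = 1.
    apply: (mulfI a0); rewrite mulr1 -[RHS]hit hiterf; ring.
  set w := (W n).[a] in e1.
  have hw : absL (w - 1) < 1.
    apply: (le_lt_trans _ ha); rewrite /w hWe -[X in _ - X](expr1n _ n) -prod_cst.
    apply: (v_prod_diff hL); first exact: (v_ge0 hL).
    - by move=> j /=; apply: (integral_horner hL hSLi); apply: ltW; apply: (le_lt_trans _ ha); apply: hQiv; apply: ltW.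
    - by move=> j /=; rewrite (v1 hL).
    - move=> j /=; rewrite -hSL0 -horner_coef0.
      have hy : absL (iter j Qf a) <= absL a by apply: hQiv; apply: ltW.
      apply: le_trans (integral_lip hL hSLi _ _) _.
      + by apply: le_trans hy _; apply: ltW.
      + by rewrite (v0 hL) ler01.
      by rewrite subr0.
  have hwp : absL (w ^+ p - 1) < 1.
    by rewrite -(expr1n _ p) -(frobB hchL) (vX hL) exprn_ilt1 ?(v_ge0 hL) // -lt0n.
  have hLn : absL (Lm ^+ n - 1) < 1.
    have -> : Lm ^+ n - 1 = - (Lm ^+ n * (w ^+ p - 1)) by rewrite mulrBr mulr1 e1 opprB.
    by rewrite (vN hL) (vM hL) (vX hL) hLm expr1n mul1r.
  have hr : absL (Lm ^+ (n %% q) - 1) < 1.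
    have hq' : absL ((Lm ^+ q) ^+ (n %/ q) - 1) < 1.
      by apply: hpow1 => //; rewrite (vX hL) hLm expr1n.
    have -> : Lm ^+ (n %% q) - 1 =
       (Lm ^+ n - 1) - Lm ^+ (n %% q) * ((Lm ^+ q) ^+ (n %/ q) - 1).
      have en : Lm ^+ n = Lm ^+ (n %% q) * (Lm ^+ q) ^+ (n %/ q).
        by rewrite -exprM -exprD mulnC addnC -divn_eq.
      rewrite en; ring.
    apply: (vB_lt hL) => //; rewrite (vM hL) (vX hL) hLm expr1n mul1r //.
  have [r0|rpos] := posnP (n %% q).
    by apply/dvdnP; exists (n %/ q)%N; rewrite {1}(divn_eq n q) r0 addn0.
  exfalso; apply: (hq2 (n %% q)%N); first by rewrite rpos ltn_mod q0.
  by rewrite -hf rmorphB rmorph1 rmorphXn.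
have hper : forall a, periodic_pt absL QL a -> g a = a /\ h.[a] = 0.
  move=> a [ha a0 [n [n0 hn]]].
  rewrite piter_eval -/Qf in hn.
  have /dvdnP [m em] := hdiv n a ha a0 hn.
  have m0 : (0 < m)%N by move: n0; rewrite em muln_gt0 => /andP[].
  have hgq : forall x, iter q Qf x = g x by move=> x; rewrite /g piter_eval.
  have hm : iter m g a = a.
    by rewrite -(eq_iter hgq) -iterM -em.
  have hz := good_periodic hL hp hchL m0 hgood ha a0 hm.
  split; last exact: hz.
  have [-> _] := hgood.1 a ha.
  by rewrite hz addr0 expr1n mulr1.
have hgq : forall x, iter q Qf x = g x by move=> x; rewrite /g piter_eval.
pose Hn := fix Hn n := if n is n'.+1 then Hp p (iter (p ^ n') g) (Hn n') else Hf.
have hgoodn : forall n, good absL p (iter (p ^ n) g) (Hn n).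
  elim=> [|n IH]; first by apply: (good_ext _ hgood) => x; rewrite expn0.
  apply: (good_ext _ (good_p hL hp hchL IH)) => x.
  by rewrite expnS iterM.
have hHnv : forall n x, absL x < 1 -> absL (Hn n x) = absL h.[x] ^+ (p ^ n).
  move=> n x hx; elim: n => [|n IH]; first by rewrite expn0 expr1.
  by rewrite /= (v_Hp hL hp hchL (hgoodn n) hx) IH -exprM expnSr.
have hpiterN : forall n x, (piter QL (q * p ^ n)).[x] = iter (p ^ n) g x.
  move=> n x; rewrite piter_eval mulnC iterM.
  exact: (eq_iter hgq (p ^ n) x).
have hfN : forall n x, absL x < 1 ->
    (piter QL (q * p ^ n) - 'X).[x] = x * (Hn n x) ^+ p.
  move=> n x hx; rewrite hornerD hornerN hornerX hpiterN.
  have [-> _] := (hgoodn n).1 x hx.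
  by rewrite (frobD hchL) expr1n mulrDr mulr1 addrAC subrr add0r.
have hfNv : forall n x, absL x < 1 ->
    absL (piter QL (q * p ^ n) - 'X).[x] = absL x * absL h.[x] ^+ (p ^ n * p).
  by move=> n x hx; rewrite hfN // (vM hL) (vX hL) hHnv // exprM.
set pi := nu - 1.
have pi0 : 0 < absL pi by rewrite (v_gt0 hL) // subr_eq0.
have hx0 : absL (pi ^+ 2) < absL pi.
  by rewrite (vX hL) expr2 -{3}[absL pi]mul1r ltr_pM2r.
have hx01 : absL (pi ^+ 2) < 1 by apply: lt_trans hx0 _.
have hx0h : h.[pi ^+ 2] != 0.
  have hl := integral_lip hL hhi (ltW hx01) (_ : absL 0 <= 1).
  rewrite (v0 hL) ler01 subr0 in hl; have hl' := hl isT.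
  have -> : h.[pi ^+ 2] = (h.[pi ^+ 2] - h.[0]) + h.[0] by rewrite subrK.
  rewrite -(v_eq0 hL) v_strict // ?hh0 ?(v_eq0 hL) ?subr_eq0 //.
  by rewrite hh0 in hl'; exact: (le_lt_trans hl' hx0).
have hnz : forall n, piter QL (q * p ^ n) - 'X != 0.
  move=> n; apply/negP => /eqP e.
  have := hfN n _ hx01; rewrite e horner0 => /esym/eqP.
  rewrite mulf_eq0 => /orP [hz | /eqP hz].
    by move: hz; rewrite expf_eq0 /= subr_eq0 (negbTE hnu1).
  have : absL (Hn n (pi ^+ 2) ^+ p) = 0 by rewrite hz (v0 hL).
  rewrite (vX hL) hHnv // -exprM => /eqP.
  by rewrite expf_eq0 (v_eq0 hL) (negbTE hx0h) andbF.
have hnz0 : piter QL q - 'X != 0 by have := hnz 0%N; rewrite expn0 muln1.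
split.
  move=> a ha; have [hga _] := hper a ha.
  have [ha1 a0 _] := ha.
  split => //; move=> k /andP [k0 kq]; apply/negP => /eqP hk.
  rewrite piter_eval -/Qf in hk.
  have := hdiv k a ha1 a0 hk => /(dvdn_leq k0).
  by rewrite leqNgt kq.
split.
  have hh00 : absL h`_0 < 1 by rewrite -horner_coef0 hh0.
  have [a [ha hra]] := root_small hL hhi hh00 hunit.
  have a0 : a != 0 by apply: contraTneq hra => ->; rewrite rootE.
  exists a; split => //; exists q; split => //.
  change (g a = a); have [-> _] := hgood.1 a ha; move: hra; rewrite rootE /Hf => /eqP ->.
  by rewrite addr0 expr1n mulr1.
split.
  have [rs ers] := closed_field_poly_normal (piter QL q - 'X).
  exists [seq z <- rs | (absL z < 1) && (z != 0)] => a; rewrite mem_filter.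
  split.
    move=> ha; have [ha1 a0 _] := ha; rewrite ha1 a0 /=.
    have [hga _] := hper a ha.
    have : root (piter QL q - 'X) a by rewrite rootE hornerD hornerN hornerX -/(g a) hga subrr.
    rewrite ers rootE hornerZ mulf_eq0 lead_coef_eq0 (negbTE hnz0) /=.
    by rewrite -rootE root_prod_XsubC.
  move=> /andP [/andP [ha1 a0] ars]; split => //; exists q; split => //.
  apply/eqP; rewrite -subr_eq0.
  have : (piter QL q - 'X).[a] = 0.
    by rewrite ers hornerZ; have := root_prod_XsubC rs a; rewrite ars rootE => /eqP ->; rewrite mulr0.
  by rewrite hornerD hornerN hornerX => ->.
move=> a ha; have [ha1 a0 _] := ha.
have ha0 : 0 < absL a by rewrite (v_gt0 hL).
have [N0 hN0] := smallpow pi0 hnu1v ha0.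
have hxa : forall n, (N0 <= n)%N -> absL (a + pi ^+ n) = absL a /\ absL (a + pi ^+ n) < 1.
  move=> n hn; have e : absL (a + pi ^+ n) = absL a.
    by rewrite (v_strictr hL) // (vX hL) hN0.
  by rewrite e.
have hf1 : forall x, absL x < 1 ->
    absL (piter QL q - 'X).[x] = absL x * absL h.[x] ^+ p.
  by move=> x hx; have := hfNv 0%N x hx; rewrite expn0 muln1 mul1n.
have hm1 : mup a (piter QL q - 'X) = (p * mup a h)%N.
  apply: (mup_compare hL (c1 := 1) (c2 := absL a) (N0 := N0) hnz0 hhn0 (ltW ha1) pi0 hnu1v ltr01 ha0).
  move=> n hn; have [e1 e2] := hxa n hn.
  by rewrite hf1 // e1 mul1r.
split => //.
  by rewrite /fix_mult hm1 dvdn_mulr.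
move=> n n1; split; first exact: hnz.
rewrite /fix_mult.
apply: (mup_compare hL (c1 := absL a ^+ (p ^ n)) (c2 := absL a) (N0 := N0) (hnz n) hnz0 (ltW ha1) pi0 hnu1v _ ha0).
  by rewrite exprn_gt0.
move=> m hm; have [e1 e2] := hxa m hm.
rewrite hfNv // hf1 // e1 exprMn -exprM mulnC.
by rewrite mulrCA.
Qed.
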